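(* Let $b>a>0$. Let $\mathcal G$ be the set of measurable $g:\mathbb{R}_+\to\mathbb{R}_+$ with $g(s)\le 1/s$ for a.e. $s>0$, and for $g\in\mathcal G$ set $I_a(g)=\int_0^\infty g^{1+a}$, $I_b(g)=\int_0^\infty g^{1+b}$, $\mathcal G_b=\{g\in\mathcal G:0<I_b(g)<\infty\}$. Then $$\sup\{I_b(g)^{-a/b}I_a(g):g\in\mathcal G_b\}=\frac{a+1}{a}\Big[\frac{b}{b+1}\Big]^{a/b},$$ and the supremum is attained at $g(s)=\min\{k,1/s\}$ for any $k>0$. *)

(* Defs.v *)
From HB Require Import structures.
From mathcomp Require Import all_boot all_order all_algebra.
From mathcomp Require Import all_classical all_reals all_analysis.
Set Implicit Arguments. Unset Strict Implicit. Unset Printing Implicit Defensive.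
Import Order.TTheory GRing.Theory Num.Theory.
Local Open Scope classical_set_scope.
Local Open Scope ring_scope.

Definition Rplus (R : realType) : set R := `[0%R, +oo[%classic.

Definition Gclass (R : realType) (g : R -> R) : Prop :=
  measurable_fun (@Rplus R) g /\
  (forall s : R, 0 <= s -> 0 <= g s) /\
  {ae (@lebesgue_measure R), forall s : R, 0 < s -> g s <= s^-1}.

Definition Iexp (R : realType) (p : R) (g : R -> R) : \bar R :=
  (\int[@lebesgue_measure R]_(s in @Rplus R) ((g s) `^ (1 + p))%:E)%E.

Definition Gclass_b (R : realType) (b : R) (g : R -> R) : Prop :=
  Gclass g /\ (0 < Iexp b g)%E /\ (Iexp b g < +oo)%E.

Definition Jratio (R : realType) (a b : R) (g : R -> R) : \bar R :=
  ((fine (Iexp b g) `^ (- (a / b)))%:E * Iexp a g)%E.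

Definition gmin (R : realType) (k : R) : R -> R := fun s => Num.min k s^-1.

(* Main.v *)
Require Import Defs.
From HB Require Import structures.
From mathcomp Require Import all_boot all_order all_algebra.
From mathcomp Require Import all_classical all_reals all_analysis.
From mathcomp Require Import ring lra.
From mathcomp Require Import measurable_realfun.
Import Order.TTheory GRing.Theory Num.Theory.
Import numFieldTopology.Exports numFieldNormedType.Exports.
Local Open Scope classical_set_scope.
Local Open Scope ring_scope.

Lemma young {R : realType} (x th : R) : 0 <= x -> 0 < th -> th < 1 ->
  x `^ th <= th * x + (1 - th).
Proof.
move=> x0 th0 th1.
have h1 : 0 < 1 - th by lra.
have := @conjugate_powR R (x `^ th) 1 th^-1 (1 - th)^-1 (powR_ge0 _ _) ler01.
rewrite !invr_gt0 th0 h1 !invrK => /(_ isT isT).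
rewrite addrC subrK => /(_ erefl).
rewrite mulr1 -powRrM mulfV ?gt_eqF // powRr1 // powR1.
by rewrite mulrC mul1r.
Qed.

Lemma powRV {R : realType} (u r : R) : 0 < u -> (u^-1) `^ r = (u `^ r)^-1.
Proof.
move=> u0.
have := @powRM R u u^-1 r (ltW u0).
rewrite invr_ge0 (ltW u0) => /(_ isT).
rewrite mulfV ?gt_eqF // powR1 => h.
apply: (@mulfI _ (u `^ r)); first by rewrite gt_eqF ?powR_gt0.
by rewrite -h mulfV // gt_eqF ?powR_gt0.
Qed.

Lemma powR_div {R : realType} (t u r : R) : 0 <= t -> 0 < u ->
  (t / u) `^ r = t `^ r / u `^ r.
Proof.
move=> t0 u0; rewrite powRM // ?powRV // invr_ge0 ltW //.
Qed.

Lemma youngY {R : realType} (a b t u : R) : 0 < a -> a < b -> 0 <= t -> 0 < u ->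
  t `^ (1 + a) <= ((1 + a) / (1 + b)) * (u `^ (1 + a) / u `^ (1 + b)) * t `^ (1 + b)
     + (1 - (1 + a) / (1 + b)) * u `^ (1 + a).
Proof.
move=> a0 ab t0 u0.
set th := (1 + a) / (1 + b).
have b1 : 0 < 1 + b by lra.
have th0 : 0 < th by rewrite divr_gt0 //; lra.
have th1 : th < 1 by rewrite ltr_pdivrMr //; lra.
have := @young R _ th (powR_ge0 (t / u) (1 + b)) th0 th1.
have e : (1 + b) * th = 1 + a by rewrite /th mulrC divfK ?gt_eqF.
rewrite -powRrM e !powR_div //.
set X := t `^ (1 + a); set Y := t `^ (1 + b).
set Ua := u `^ (1 + a); set Ub := u `^ (1 + b).
have Ua0 : 0 < Ua by rewrite powR_gt0.
have Ub0 : 0 < Ub by rewrite powR_gt0.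
rewrite ler_pdivrMr // => h.
apply: (le_trans h); rewrite le_eqVlt; apply/orP; left; apply/eqP.
by field; rewrite gt_eqF.
Qed.

Arguments youngY {R a b t u}.

Definition muk {R : realType} (a b k : R) :=
  ((1 + a) / (1 + b)) * (k `^ (1 + a) / k `^ (1 + b)).

Lemma ratio_mono {R : realType} (a b u k : R) : a < b -> 0 < u -> u <= k ->
  k `^ (1 + a) / k `^ (1 + b) <= u `^ (1 + a) / u `^ (1 + b).
Proof.
move=> ab u0 uk.
have k0 : 0 < k by apply: lt_le_trans uk.
have E x : 0 < x -> x `^ (1 + a) / x `^ (1 + b) = (x `^ (b - a))^-1.
  move=> x0; rewrite -powRB; last by apply/implyP => _; rewrite gt_eqF.
  by rewrite -powRN; congr (_ `^ _); ring.
rewrite !E // lef_pV2 ?posrE ?powR_gt0 //.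
by apply: ge0_ler_powR; rewrite ?nnegrE; [lra|exact: ltW|exact: ltW|].
Qed.

Arguments ratio_mono {R a b u k}.

Lemma pointwise {R : realType} (a b k s t : R) : 0 < a -> a < b -> 0 < k ->
  0 < s -> 0 <= t -> t <= s^-1 ->
  t `^ (1 + a) + muk a b k * (Num.min k s^-1) `^ (1 + b) <=
  muk a b k * t `^ (1 + b) + (Num.min k s^-1) `^ (1 + a).
Proof.
move=> a0 ab k0 s0 t0 ts.
have b1 : 0 < 1 + b by lra.
have th0 : 0 < (1 + a) / (1 + b) by rewrite divr_gt0 //; lra.
have [ks|sk] := leP k s^-1.
  idtac.
  have := youngY a0 ab t0 k0; rewrite /muk.
  have Kb0 : 0 < k `^ (1 + b) by rewrite powR_gt0.
  have h : (1 + a) / (1 + b) * (k `^ (1 + a) / k `^ (1 + b)) * k `^ (1 + b)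
       = (1 + a) / (1 + b) * k `^ (1 + a).
    by rewrite -mulrA divfK // gt_eqF.
  move: h; set mu := _ * (_ / _); set th := (1 + a) / (1 + b).
  set X := t `^ _; set Y := t `^ _; set Ka := k `^ _; set Kb := k `^ _.
  move=> h1 h2; nra.
idtac.
set u := s^-1.
have u0 : 0 < u by rewrite invr_gt0.
have := youngY a0 ab t0 u0.
have c_ge := ratio_mono ab u0 (ltW sk).
have Yle : t `^ (1 + b) <= u `^ (1 + b).
  by apply: ge0_ler_powR; rewrite ?nnegrE; [lra|done|exact: ltW|].
have Ub0 : 0 < u `^ (1 + b) by rewrite powR_gt0.
have h : (1 + a) / (1 + b) * (u `^ (1 + a) / u `^ (1 + b)) * u `^ (1 + b)
       = (1 + a) / (1 + b) * u `^ (1 + a).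
  by rewrite -mulrA divfK // gt_eqF.
move: h c_ge; rewrite /muk.
set th := (1 + a) / (1 + b).
set X := t `^ (1 + a); set Y := t `^ (1 + b); set Ua := u `^ (1 + a); set Ub := u `^ (1 + b).
set Ka := k `^ _; set Kb := k `^ _.
set c := Ua / Ub; set c' := Ka / Kb.
move=> h1 h2 h3.
have h4 : 0 <= th * (c - c') * (Ub - Y).
  by apply: mulr_ge0; [apply: mulr_ge0; [exact: (ltW th0)|rewrite subr_ge0]|rewrite subr_ge0].
nra.
Qed.

Lemma mRplus {R : realType} : measurable (@Rplus R).
Proof. exact: measurable_itv. Qed.

Lemma gmin_mfun {R : realType} (k : R) : measurable_fun (@Rplus R) (gmin k).
Proof.
apply/(measurable_realfun.measurable_fun_itv_obnd_cbndP 0 +oo%O (gmin k)).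
have mi : measurable_fun (`]0%R, +oo[ : set R) (@GRing.inv R).
  apply: measurable_realfun.open_continuous_measurable_fun; first exact: interval_open.
  move=> x; rewrite inE /= in_itv /= andbT => x0.
  by apply: inv_continuous; rewrite gt_eqF.
exact: (measurable_realfun.measurable_minr (measurable_cst k) mi).
Qed.

Lemma ae_neq0 {R : realType} :
  {ae (@lebesgue_measure R), forall s : R, s != 0}.
Proof.
exists [set (0:R)]; split => //; first exact: lebesgue_measure_set1.
by move=> x /= /negP; rewrite negbK => /eqP.
Qed.

Lemma mpow {R : realType} (p : R) (f : R -> R) :
  measurable_fun (@Rplus R) f ->
  measurable_fun (@Rplus R) (fun s => (f s) `^ p).
Proof.
move=> mf.
exact: (measurableT_comp (measurable_realfun.measurable_powR p) mf).
Qed.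

Lemma compare {R : realType} (a b k : R) (g : R -> R) :
  0 < a -> a < b -> 0 < k -> Gclass g ->
  (Iexp a g + (muk a b k)%:E * Iexp b (gmin k) <=
   (muk a b k)%:E * Iexp b g + Iexp a (gmin k))%E.
Proof.
move=> a0 ab k0 [mg [g0 gae]].
set mu := muk a b k.
have mu0 : 0 <= mu.
  rewrite /mu /muk; apply: mulr_ge0; last by apply: divr_ge0; exact: powR_ge0.
  by apply: divr_ge0; lra.
have gm0 s : 0 <= s -> 0 <= gmin k s.
  move=> s0; rewrite /gmin le_min (ltW k0) /= invr_ge0 //.
pose F1 s := ((g s) `^ (1 + a) + mu * (gmin k s) `^ (1 + b))%:E.
pose F2 s := (mu * (g s) `^ (1 + b) + (gmin k s) `^ (1 + a))%:E.
have mgm := @gmin_mfun R k.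
have L : (\int[lebesgue_measure]_(s in @Rplus R) F1 s =
    Iexp a g + mu%:E * Iexp b (gmin k))%E.
  rewrite /F1 /Iexp; under eq_integral do rewrite EFinD EFinM.
  rewrite ge0_integralD //; first last.
  - apply/measurable_EFinP; apply: measurable_funM => //; exact: mpow.
  - by move=> x _; rewrite lee_fin mulr_ge0 // powR_ge0.
  - apply/measurable_EFinP; exact: mpow.
  - by move=> x _; rewrite lee_fin powR_ge0.
  - exact: mRplus.
  rewrite ge0_integralZl //; first exact: mRplus.
  - apply/measurable_EFinP; exact: mpow.
  - by move=> x _; rewrite lee_fin powR_ge0.
have Rr : (\int[lebesgue_measure]_(s in @Rplus R) F2 s =
    mu%:E * Iexp b g + Iexp a (gmin k))%E.
  rewrite /F2 /Iexp; under eq_integral do rewrite EFinD EFinM.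
  rewrite ge0_integralD //; first last.
  - apply/measurable_EFinP; exact: mpow.
  - by move=> x _; rewrite lee_fin powR_ge0.
  - apply/measurable_EFinP; apply: measurable_funM => //; exact: mpow.
  - by move=> x _; rewrite lee_fin mulr_ge0 // powR_ge0.
  - exact: mRplus.
  rewrite ge0_integralZl //; first exact: mRplus.
  - apply/measurable_EFinP; exact: mpow.
  - by move=> x _; rewrite lee_fin powR_ge0.
rewrite -L -Rr; apply: ae_ge0_le_integral.
- exact: mRplus.
- by move=> x _; rewrite /F1 lee_fin; apply: addr_ge0; [exact: powR_ge0|apply: mulr_ge0 => //; exact: powR_ge0].
- apply/measurable_EFinP; apply: measurable_funD; first exact: mpow.
  apply: measurable_funM => //; exact: mpow.
- by move=> x _; rewrite /F2 lee_fin; apply: addr_ge0; [apply: mulr_ge0 => //; exact: powR_ge0|exact: powR_ge0].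
- apply/measurable_EFinP; apply: measurable_funD; last exact: mpow.
  apply: measurable_funM => //; exact: mpow.
have FF := ae_filter_ringOfSetsType (@lebesgue_measure R).
apply: (filterS2 _ _ gae (@ae_neq0 R)) => x h1 h2 Dx.
have x0 : 0 < x.
  move: Dx; rewrite /Rplus /= in_itv /= andbT le_eqVlt => /orP[/eqP x0|//].
  by move: h2; rewrite -x0 eqxx.
rewrite /F1 /F2 lee_fin.
exact: (@pointwise R a b k x (g x) a0 ab k0 x0 (g0 x (ltW x0)) (h1 x0)).
Qed.

Lemma dF {R : realType} (p x : R) : 0 < p -> 0 < x ->
  is_derive x 1 (fun y : R => (- p^-1) * y `^ (- p)) (x `^ (-(1 + p))).
Proof.
move=> p0 x0.
have h := is_deriveZ (- p^-1) (is_derive1_powR (- p) x0).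
have -> : (fun y : R => (- p^-1) * y `^ (- p)) = (- p^-1 \*: (powR (R:=R))^~ (- p)).
  by apply/funext => y.
suff -> : x `^ (-(1+p)) = (- p^-1 *: (- p * x `^ (- p - 1))) by [].
rewrite /GRing.scale /= mulrA mulrNN mulVf ?gt_eqF // mul1r.
by congr (_ `^ _); ring.
Qed.

Lemma powN_cvg0 {R : realType} (p : R) : 0 < p ->
  x `^ (- p) @[x --> +oo] --> (0 : R).
Proof.
move=> p0; apply/cvgrPdist_lt => e e0.
set M := e `^ (- p^-1).
have M0 : 0 < M by rewrite powR_gt0.
near=> x.
have Mx : M < x by near: x; apply: nbhs_pinfty_gt; exact: num_real.
have x0 : 0 < x by apply: lt_trans Mx.
rewrite sub0r normrN ger0_norm ?powR_ge0 //.
have -> : e = M `^ (- p).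
  by rewrite /M -powRrM mulrNN mulVf ?gt_eqF // powRr1 // ltW.
rewrite !powRN ltf_pV2 ?posrE ?powR_gt0 //.
by apply: gt0_ltr_powR; rewrite ?nnegrE ?ltW.
Unshelve. all: by end_near.
Qed.

Lemma tail_int {R : realType} (p k : R) : 0 < p -> 0 < k ->
  (\int[@lebesgue_measure R]_(x in `[k^-1%R, +oo[) (x `^ (-(1 + p)))%:E =
   (k `^ p / p)%:E)%E.
Proof.
move=> p0 k0.
have a0 : 0 < k^-1 by rewrite invr_gt0.
pose F : R -> R := fun y : R => (- p^-1) * y `^ (- p).
have Fa : F k^-1 = - (k `^ p / p).
  by rewrite /F powRN powRV // invrK mulNr mulrC.
rewrite (@ge0_continuous_FTC2y R (fun x => x `^ (-(1 + p))) F k^-1 0).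
- by rewrite Fa sub0e EFinN oppeK.
- by move=> x _; exact: powR_ge0.
- apply: derivable_within_continuous => x; rewrite in_itv /= andbT => ax.
  have x0 : 0 < x by apply: lt_le_trans ax.
  by apply: derivable_powR; rewrite in_itv /= andbT.
- have -> : (0 : R) = - p^-1 * 0 by rewrite mulr0.
  apply: cvgM; first exact: cvg_cst.
  exact: powN_cvg0.
- move=> x ax; have x0 : 0 < x by apply: lt_trans ax.
  by rewrite /F; case: (dF p x p0 x0).
- apply: cvg_at_right_filter.
  apply: differentiable_continuous; apply/derivable1_diffP.
  by rewrite /F; case: (dF p k^-1 p0 a0).
- move=> x; rewrite in_itv /= andbT => ax.
  have x0 : 0 < x by apply: lt_trans ax.
  by rewrite derive1E (@derive_val _ _ _ _ _ _ _ (dF p x p0 x0)).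
Qed.

Lemma Ival {R : realType} (p k : R) : 0 < p -> 0 < k ->
  Iexp p (gmin k) = (k `^ p * ((p + 1) / p))%:E.
Proof.
move=> p0 k0.
have a0 : 0 < k^-1 by rewrite invr_gt0.
have mf := @mpow R (1 + p) _ (@gmin_mfun R k).
rewrite /Iexp.
have E : @Rplus R = `[0, k^-1[ `|` `[k^-1, +oo[.
  rewrite /Rplus; apply: itv_bndbnd_setU; rewrite bnd_simp //; exact: ltW.
rewrite E ge0_integral_setU //; first last.
- apply: lt_disjoint => x y; rewrite !in_itv /= andbT => /andP[_ h1] h2.
  exact: lt_le_trans h1 h2.
- by move=> x _; rewrite lee_fin powR_ge0.
- by rewrite -E; apply/measurable_EFinP.
have mA : measurable_fun `]0%R, k^-1%R[ (fun x => ((gmin k x) `^ (1 + p))%:E).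
  apply/measurable_EFinP; apply: measurable_funS mf; first exact: mRplus.
  by move=> x /=; rewrite /Rplus /= !in_itv /= andbT => /andP[/ltW].
rewrite -integral_itv_obnd_cbnd //.
have -> : (\int[lebesgue_measure]_(x in `]0%R, k^-1%R[) ((gmin k x) `^ (1 + p))%:E)%E =
          (\int[lebesgue_measure]_(x in `]0%R, k^-1%R[) (cst (k `^ (1 + p))%:E x))%E.
  apply: eq_integral => x; rewrite inE /= in_itv /= => /andP[x0 xk].
  rewrite /gmin /= min_l //; apply: ltW.
  by rewrite -(invrK k) ltf_pV2 // posrE.
rewrite integral_cst //= lebesgue_measure_itv /= lte_fin a0 sube0.
have -> : (\int[lebesgue_measure]_(x in `[k^-1%R, +oo[) ((gmin k x) `^ (1 + p))%:E)%E =
          (\int[lebesgue_measure]_(x in `[k^-1%R, +oo[) (x `^ (-(1 + p)))%:E)%E.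
  apply: eq_integral => x; rewrite inE /= in_itv /= andbT => kx.
  have x0 : 0 < x by apply: lt_le_trans kx.
  rewrite /gmin min_r; last by rewrite -(invrK k) lef_pV2 // posrE.
  by rewrite powRV // powRN.
rewrite tail_int // -EFinM -EFinD; congr (_%:E).
rewrite powRD; last by apply/implyP => _; rewrite gt_eqF.
rewrite powRr1 ?ltW //.
by rewrite mulrAC mulfV ?gt_eqF // mul1r mulrDl divff ?gt_eqF // mulrDr mulr1 mul1r.
Qed.

Lemma Jval {R : realType} (a b k : R) : 0 < a -> a < b -> 0 < k ->
  Jratio a b (gmin k) = ((a + 1) / a * (b / (b + 1)) `^ (a / b))%:E.
Proof.
move=> a0 ab k0.
have b0 : 0 < b by lra.
rewrite /Jratio !Ival //= -EFinM; congr (_%:E).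
have c0 : 0 < (b + 1) / b by rewrite divr_gt0 //; lra.
rewrite powRM ?powR_ge0 ?ltW //.
rewrite -powRrM (_ : b * - (a / b) = - a); last by field; rewrite gt_eqF.
have E1 : ((b + 1) / b) `^ (- (a / b)) = (b / (b + 1)) `^ (a / b).
  by rewrite powRN -powRV // invf_div.
rewrite E1 powRN.
have ka : 0 < k `^ a by rewrite powR_gt0.
set A := (a + 1) / a; set C := (b / (b + 1)) `^ (a / b); set K := k `^ a.
by field; rewrite gt_eqF.
Qed.

Lemma Gb_gmin {R : realType} (b k : R) : 0 < b -> 0 < k -> Gclass_b b (gmin k).
Proof.
move=> b0 k0; split; [split; [exact: gmin_mfun|split]|].
- by move=> s s0; rewrite /gmin le_min (ltW k0) /= invr_ge0.
- by apply: aeW => s s0; rewrite /gmin ge_min lexx orbT.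
- rewrite Ival //; split; last exact: ltry.
  rewrite lte_fin; apply: mulr_gt0; first exact: powR_gt0.
  by apply: divr_gt0; lra.
Qed.

Theorem mainTheorem4 (R : realType) (a b : R) (ha : 0 < a) (hab : a < b) :
  ereal_sup [set Jratio a b g | g in Gclass_b b] =
    ((a + 1) / a * (b / (b + 1)) `^ (a / b))%:E /\
  (forall k : R, 0 < k ->
     Gclass_b b (gmin k) /\
     Jratio a b (gmin k) = ((a + 1) / a * (b / (b + 1)) `^ (a / b))%:E).
Proof.
have b0 : 0 < b by lra.
split; last by move=> k k0; split; [exact: Gb_gmin | exact: Jval].
apply/le_anti/andP; split; last first.
  rewrite -(@Jval R a b 1) //; apply: ereal_sup_ubound; exists (gmin 1) => //.
  exact: Gb_gmin.
apply: ge_ereal_sup => _ [g [Gg [Ipos Ifin]] <-].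
have Bfin : Iexp b g \is a fin_num by rewrite ge0_fin_numE // ltW.
set B := fine (Iexp b g).
have B0 : 0 < B by apply: fine_gt0; rewrite Ipos Ifin.
have IB : Iexp b g = B%:E by rewrite fineK.
set X := B * (b / (b + 1)).
have X0 : 0 < X by apply: mulr_gt0 => //; apply: divr_gt0; lra.
set k := X `^ b^-1.
have k0 : 0 < k by rewrite powR_gt0.
have Ik : Iexp b (gmin k) = B%:E.
  rewrite Ival //; congr (_%:E).
  rewrite /k -powRrM mulVf ?gt_eqF // powRr1 ?ltW // /X.
  by field; apply/andP; split; rewrite gt_eqF //; lra.
have cmp := @compare R a b k g ha hab k0 Gg.
rewrite IB Ik -EFinM addeC leeD2lE // in cmp.
have J := @Jval R a b k ha hab k0.
rewrite -J /Jratio Ik IB.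
apply: lee_pmul => //; first by rewrite lee_fin powR_ge0.
by apply: integral_ge0 => x _; rewrite lee_fin powR_ge0.
Qed.
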